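(* Let $\mathcal A\subseteq E^\infty$, let $V\subseteq E$ be a block subspace, $\vec v$ a finite block sequence and $T$ a $(V,\vec v)$-rule. Then there is a block subspace $X\subseteq V$ such that for every $\vec x\in T$: if there exists a block subspace $Y\subseteq X$ such that player I has a strategy in $B^T_Y(\vec x)$ to play in $\mathcal A$, then for every block subspace $Y\subseteq X$, player I has a strategy in $B^T_Y(\vec x)$ to play in $\mathcal A$.
   Context: Fix a countable field $\mathfrak F$ and let $E$ be the countable-dimensional $\mathfrak F$-vector space with basis $(e_n)$. For non-zero $x=\sum a_ne_n$, ${\rm supp}\,x=\{n:a_n\neq0\}$. A block sequence is a sequence of non-zero vectors with $\max{\rm supp}\,x_n<\min{\rm supp}\,x_{n+1}$. ''Subspace'' means an infinite-dimensional block subspace of $E$. For a subspace $X$, $X[k]=\{x\in X\setminus\{0\}:k<\min{\rm supp}\,x\}$. $E^\infty=E^{\mathbb N}$ with the product of discrete topologies; $E^{<\infty}$ is the set of finite block sequences; $\hat{}$ is concatenation; $T_{\vec x}=\{\vec y:\vec x\,\hat{}\,\vec y\in T\}$. Game $B_V(\vec v)$: if $|\vec v|$ is even: II plays a subspace $Z_0\subseteq V$; I plays non-zero $x_0\in Z_0$ and $n_0\in\mathbb N$; II plays non-zero $y_0\in V[n_0]$ and a subspace $Z_1\subseteq V$; I plays $x_1\in Z_1$, $n_1$; II plays $y_1\in V[n_1]$, $Z_2$; etc.; outcome $\vec v\,\hat{}\,(x_0,y_0,x_1,y_1,\dots)$. If $|\vec v|$ is odd: I plays $n_0$; II plays $y_0\in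 V[n_0]$ and $Z_0\subseteq V$; I plays $x_0\in Z_0$ and $n_1$; II plays $y_1\in V[n_1]$ and $Z_1$; etc.; outcome $\vec v\,\hat{}\,(y_0,x_0,y_1,x_1,\dots)$. A $(V,\vec v)$-rule is a set $T\subseteq E^{<\infty}$ with $\vec v\in T$ such that: (i) if $\vec y\in T$, $|\vec y|$ odd, then for every subspace $Z\subseteq V$ there is $z\in Z$ with $\vec y\,\hat{}\,z\in T$; (ii) if $\vec y\in T$, $|\vec y|$ even, then there is $n$ with $\vec y\,\hat{}\,z\in T$ for all $z\in V[n]$. The $T$-induced subgame $B^T_V(\vec v)$ is played as $B_V(\vec v)$ with the additional requirement that every position, i.e. the finite sequence of vectors played so far listed in the order they appear in the outcome, belongs to $T_{\vec v}$. A strategy to play in $\mathcal A$ is one all of whose outcomes lie in $\mathcal A$. *)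

(* Defs.v *)
From HB Require Import structures.
From mathcomp Require Import all_boot all_order all_algebra.
Set Implicit Arguments. Unset Strict Implicit. Unset Printing Implicit Defensive.
Import Order.TTheory GRing.Theory Num.Theory.
Local Open Scope ring_scope.

(* E = countable-dimensional F-vector space with basis (e_n):
   modelled as {poly F}, with e_n = 'X^n and the n-th coordinate x`_n. *)

Section Defs.
Variable F : countFieldType.
Local Notation E := {poly F}.

Definition supp_below (x y : E) : Prop :=
  forall i j, x`_i != 0 -> y`_j != 0 -> (i < j)%N.

Definition block_seq (b : nat -> E) : Prop :=
  (forall n, b n != 0) /\ (forall n, supp_below (b n) (b n.+1)).

Definition fin_block_seq (s : seq E) : Prop :=
  (forall i, (i < size s)%N -> nth 0 s i != 0) /\
  (forall i, (i.+1 < size s)%N -> supp_below (nth 0 s i) (nth 0 s i.+1)).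

Definition span_of (b : nat -> E) (x : E) : Prop :=
  exists (n : nat) (c : 'I_n -> F), x = \sum_(i < n) c i *: b i.

Definition block_subspace (Z : E -> Prop) : Prop :=
  exists b : nat -> E, block_seq b /\ (forall x, Z x <-> span_of b x).

Definition subsp (Z V : E -> Prop) : Prop := forall x, Z x -> V x.

Definition tail_sp (X : E -> Prop) (k : nat) (x : E) : Prop :=
  X x /\ x != 0 /\ (forall i, x`_i != 0 -> (k < i)%N).

Definition is_rule (V : E -> Prop) (v : seq E) (T : seq E -> Prop) : Prop :=
  (forall y, T y -> fin_block_seq y) /\ T v /\
  (forall y, T y -> odd (size y) ->
     forall Z, block_subspace Z -> subsp Z V -> exists z, Z z /\ T (rcons y z)) /\
  (forall y, T y -> ~~ odd (size y) ->
     exists n, forall z, tail_sp V n z -> T (rcons y z)).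

Definition cat_inf (v : seq E) (w : nat -> E) : nat -> E :=
  fun n => if (n < size v)%N then nth 0 v n else w (n - size v)%N.

(* moves of II after the first: a vector and a subspace *)
Definition IImove := (E * (E -> Prop))%type.

(* Strategy of I in B_Y(v), |v| even: from Z_0 and the list
   ((y_0,Z_1),...,(y_{k-1},Z_k)) it returns (x_k, n_k). *)
Definition stratI_even := (E -> Prop) -> seq IImove -> (E * nat)%type.

(* Strategy of I in B_Y(v), |v| odd: first component is n_0; second, from
   ((y_0,Z_0),...,(y_k,Z_k)) returns (x_k, n_{k+1}). *)
Definition stratI_odd := (nat * (seq IImove -> (E * nat)))%type.

(* Convention: a player who cannot move legally loses; I must always answer
   legally as long as II has played legally, and every full play in which
   II played legally has outcome in A. *)
Definition I_wins_even (Y : E -> Prop) (T : seq E -> Prop) (v : seq E)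
    (A : (nat -> E) -> Prop) (sigma : stratI_even) : Prop :=
  forall (Z : nat -> E -> Prop) (y : nat -> E),
  let m := fun k => sigma (Z 0%N) [seq (y i, Z i.+1) | i <- iota 0 k] in
  let w := fun j => if odd j then y j./2 else (m j./2).1 in
  let premise := fun K =>
     (forall i, (i <= K)%N -> block_subspace (Z i) /\ subsp (Z i) Y) /\
     (forall i, (i < K)%N -> tail_sp Y (m i).2 (y i)) /\
     (forall j, (j <= K.*2)%N -> T (v ++ mkseq w j)) in
  (forall K, premise K ->
     Z K (m K).1 /\ (m K).1 != 0 /\ T (v ++ mkseq w K.*2.+1)) /\
  ((forall K, premise K) -> A (cat_inf v w)).

Definition I_wins_odd (Y : E -> Prop) (T : seq E -> Prop) (v : seq E)
    (A : (nat -> E) -> Prop) (sigma : stratI_odd) : Prop :=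
  forall (Z : nat -> E -> Prop) (y : nat -> E),
  let m := fun k => sigma.2 [seq (y i, Z i) | i <- iota 0 k.+1] in
  let n := fun k => if k is k'.+1 then (m k').2 else sigma.1 in
  let w := fun j => if odd j then (m j./2).1 else y j./2 in
  let premise := fun K =>
     (forall i, (i <= K)%N -> block_subspace (Z i) /\ subsp (Z i) Y) /\
     (forall i, (i <= K)%N -> tail_sp Y (n i) (y i)) /\
     (forall j, (j <= K.*2.+1)%N -> T (v ++ mkseq w j)) in
  (forall K, premise K ->
     Z K (m K).1 /\ T (v ++ mkseq w K.*2.+2)) /\
  ((forall K, premise K) -> A (cat_inf v w)).

Definition I_has_strategy (Y : E -> Prop) (T : seq E -> Prop) (v : seq E)
    (A : (nat -> E) -> Prop) : Prop :=
  if odd (size v) then exists sigma, I_wins_odd Y T v A sigma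
  else exists sigma, I_wins_even Y T v A sigma.

End Defs.

(* Main.v *)
Require Import Defs.
From HB Require Import structures.
From mathcomp Require Import all_boot all_order all_algebra.
From Stdlib Require Import ClassicalEpsilon FunctionalExtensionality Classical.
Set Implicit Arguments. Unset Strict Implicit. Unset Printing Implicit Defensive.
Import Order.TTheory GRing.Theory Num.Theory.
Local Open Scope ring_scope.

Lemma span_natP (F : countFieldType) (b : nat -> {poly F}) x :
  span_of b x <-> exists n (c : nat -> F), x = \sum_(i < n) c i *: b i.
Proof.
split.
  case=> n [c ->]; exists n, (fun i => if insub i is Some o then c o else 0).
  by apply: eq_bigr => i _; rewrite valK.
by case=> n [c ->]; exists n, (fun i : 'I_n => c i).
Qed.

Lemma widen_sum (F : countFieldType) (b : nat -> {poly F}) (c : nat -> F) n p :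
  (n <= p)%N -> \sum_(i < n) c i *: b i =
   \sum_(i < p) (if (i < n)%N then c i else 0) *: b i.
Proof.
move=> H; rewrite (big_ord_widen p (fun i => c i *: b i) H) big_mkcond /=.
by apply: eq_bigr => i _; case: ifP => _; rewrite ?scale0r.
Qed.

Lemma span0 (F : countFieldType) (b : nat -> {poly F}) : span_of b 0.
Proof. by apply/span_natP; exists 0%N, (fun _ => 0); rewrite big_ord0. Qed.

Lemma spanD (F : countFieldType) (b : nat -> {poly F}) x y :
  span_of b x -> span_of b y -> span_of b (x + y).
Proof.
move=> /span_natP [n [c ->]] /span_natP [m [d ->]]; apply/span_natP.
exists (maxn n m), (fun i => (if (i < n)%N then c i else 0) + (if (i < m)%N then d i else 0)).
rewrite (widen_sum b c (leq_maxl n m)) (widen_sum b d (leq_maxr n m)) -big_split /=.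
by apply: eq_bigr => i _; rewrite scalerDl.
Qed.

Lemma spanZ (F : countFieldType) (b : nat -> {poly F}) a x :
  span_of b x -> span_of b (a *: x).
Proof.
move=> /span_natP [n [c ->]]; apply/span_natP; exists n, (fun i => a * c i).
by rewrite scaler_sumr; apply: eq_bigr => i _; rewrite scalerA.
Qed.

Lemma span_b (F : countFieldType) (b : nat -> {poly F}) j : span_of b (b j).
Proof.
apply/span_natP; exists j.+1, (fun i => if i == j then 1 else 0).
rewrite big_ord_recr /= eqxx scale1r big1 ?add0r // => i _.
by rewrite (ltn_eqF (ltn_ord i)) scale0r.
Qed.

Lemma span_sum (F : countFieldType) (Z : {poly F} -> Prop) n (f : nat -> {poly F}) :
  Z 0 -> (forall x y, Z x -> Z y -> Z (x + y)) -> (forall i, (i < n)%N -> Z (f i)) ->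
  Z (\sum_(i < n) f i).
Proof. by move=> Z0 ZD Zf; apply: (big_ind Z) => // i _; apply: Zf. Qed.

Lemma bs_closed (F : countFieldType) (Z : {poly F} -> Prop) :
  block_subspace Z ->
  Z 0 /\ (forall x y, Z x -> Z y -> Z (x + y)) /\ (forall a x, Z x -> Z (a *: x)).
Proof.
case=> b [_ H]; split; first by apply/H/span0.
split; first by move=> x y /H hx /H hy; apply/H/spanD.
by move=> a x /H hx; apply/H/spanZ.
Qed.

Lemma bs_sum (F : countFieldType) (Z : {poly F} -> Prop) n (c : nat -> F) (f : nat -> {poly F}) :
  block_subspace Z -> (forall i, (i < n)%N -> Z (f i)) -> Z (\sum_(i < n) c i *: f i).
Proof.
move=> /bs_closed [Z0 [ZD ZZ]] Hf; apply: (span_sum (f := fun i => c i *: f i)) => //.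
by move=> i /Hf; apply: ZZ.
Qed.

Lemma nz_coef (F : countFieldType) (p : {poly F}) : p != 0 -> exists t, p`_t != 0.
Proof.
move=> H; exists (size p).-1.
have : lead_coef p != 0 by rewrite lead_coef_eq0.
by [].
Qed.

Lemma coef_lt_size (F : countFieldType) (p : {poly F}) t : p`_t != 0 -> (t < size p)%N.
Proof.
move=> H; rewrite ltnNge; apply/negP => h; move: H; by rewrite nth_default ?eqxx.
Qed.

Lemma bs_ge (F : countFieldType) (b : nat -> {poly F}) :
  block_seq b -> forall n t, (b n)`_t != 0 -> (n <= t)%N.
Proof.
case=> nz sb; elim=> [//|n IH] t Ht.
have [s Hs] := nz_coef (nz n).
exact: (leq_ltn_trans (IH s Hs) (sb n s t Hs Ht)).
Qed.

Lemma bs_lt (F : countFieldType) (b : nat -> {poly F}) :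
  block_seq b -> forall i j, (i < j)%N -> supp_below (b i) (b j).
Proof.
case=> nz sb i; elim=> [//|j IH] hij.
rewrite ltnS leq_eqVlt in hij; case/orP: hij => [/eqP ->|hij]; first exact: sb.
move=> a c Ha Hc; have [s Hs] := nz_coef (nz j).
exact: (ltn_trans (IH hij a s Ha Hs) (sb j s c Hs Hc)).
Qed.

Lemma span_supp (F : countFieldType) (b : nat -> {poly F}) k x :
  (forall n t, (b n)`_t != 0 -> (k < t)%N) -> span_of b x ->
  forall t, x`_t != 0 -> (k < t)%N.
Proof.
move=> Hb /span_natP [n [c ->]] t; apply: contraR => Ht.
rewrite coef_sum big1 // => i _; rewrite coefZ.
case: (eqVneq ((b i)`_t) 0) => [-> | h]; first by rewrite mulr0.
by have := Hb i t h; rewrite (negbTE Ht).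
Qed.

Definition bas_of (F : countFieldType) (Z : {poly F} -> Prop) : nat -> {poly F} :=
  epsilon (inhabits (fun _ => 0)) (fun b => block_seq b /\ forall x, Z x <-> span_of b x).

Lemma bas_ofP (F : countFieldType) (Z : {poly F} -> Prop) :
  block_subspace Z -> block_seq (bas_of Z) /\ forall x, Z x <-> span_of (bas_of Z) x.
Proof. by move=> H; exact: (epsilon_spec _ _ H). Qed.

Definition tl (F : countFieldType) k (Z : {poly F} -> Prop) :=
  span_of (fun n => bas_of Z (n + k.+1)).

Lemma tl_props (F : countFieldType) k (Z : {poly F} -> Prop) :
  block_subspace Z -> block_subspace (tl k Z) /\ subsp (tl k Z) Z /\
  forall x, tl k Z x -> forall t, x`_t != 0 -> (k < t)%N.
Proof.
move=> /bas_ofP [[nz sb] HZ]; set b := bas_of Z in nz sb HZ *.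
split; [|split].
- exists (fun n => b (n + k.+1)); split; last by [].
  split=> n; first exact: nz.
  exact: (sb (n + k.+1)).
- move=> x /span_natP [n [c ->]]; apply/HZ.
  apply: (span_sum (f := fun i => c i *: b (i + k.+1))).
  + exact: span0.
  + by move=> ? ?; apply: spanD.
  + by move=> i _; apply/spanZ/span_b.
- move=> x; apply: span_supp => n t Ht.
  exact: leq_trans (leq_addl n k.+1) (bs_ge (conj nz sb) Ht).
Qed.

Definition tailin (F : countFieldType) (Y' Y : {poly F} -> Prop) k :=
  forall x, Y' x -> (forall i, x`_i != 0 -> (k < i)%N) -> Y x.

Lemma transfer (F : countFieldType) A T v (Y Y' : {poly F} -> Prop) k :
  tailin Y' Y k -> I_has_strategy Y T v A -> I_has_strategy Y' T v A.
Proof.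
move=> HY; rewrite /I_has_strategy; case: ifP => _.
  case=> [[n0 f] Hw].
  pose g := fun p : IImove F => (p.1, tl k p.2).
  exists (maxn n0 k, fun s => let r := f (map g s) in (r.1, maxn r.2 k)).
  move=> Z y.
  have [H1 H2] := Hw (fun i => tl k (Z i)) y.
  move=> m n w premise.
  pose mm := fun K => f [seq (y i, tl k (Z i)) | i <- iota 0 K.+1].
  pose nn := fun K => if K is K'.+1 then (mm K').2 else n0.
  pose w0 := fun j : nat => if odd j then (mm j./2).1 else y j./2.
  pose premise0 := fun K : nat =>
     (forall i : nat,
      (i <= K)%N -> block_subspace (tl k (Z i)) /\ subsp (tl k (Z i)) Y) /\
     (forall i : nat, (i <= K)%N -> tail_sp Y (nn i) (y i)) /\
     (forall j : nat, (j <= K.*2.+1)%N -> T (v ++ mkseq w0 j)).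
  have eqm : forall K, m K = ((mm K).1, maxn (mm K).2 k).
    by move=> K; rewrite /m /mm /= -map_comp.
  have eqn : forall K, n K = maxn (nn K) k.
    by case=> [|K] //; rewrite /n eqm.
  have eqw : forall j, w j = w0 j by move=> j; rewrite /w /w0 eqm.
  have eqs : forall j, mkseq w j = mkseq w0 j by move=> j; apply: eq_mkseq.
  have conv : forall K, premise K -> premise0 K.
    move=> K [P1 [P2 P3]]; split; [|split].
    - move=> i /P1 [bZ sZ]; have [bt [st supt]] := tl_props k bZ.
      split=> // x hx; apply: HY; [exact/sZ/st | exact: supt].
    - move=> i /P2; rewrite eqn /tail_sp /= => [[Yy [ynz ysupp]]].
      split; last split => //.
        apply: HY => // t /ysupp; exact: leq_ltn_trans (leq_maxr _ _).
      move=> t /ysupp; exact: leq_ltn_trans (leq_maxl _ _).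
    - by move=> j /P3; rewrite eqs.
  split.
    move=> K P; have [Q1 Q3] := H1 K (conv K P).
    case: P => [P1 _]; have [bZ _] := P1 K (leqnn K).
    have [_ [st _]] := tl_props k bZ.
    rewrite eqm eqs /=; split; [exact: st | by []].
  move=> Hall; have -> : cat_inf v w = cat_inf v w0.
    by apply: functional_extensionality => j; rewrite /cat_inf eqw.
  by apply: H2 => K; apply: conv.
case=> sigma Hw.
pose g := fun p : IImove F => (p.1, tl k p.2).
exists (fun Z0 s => let r := sigma (tl k Z0) (map g s) in (r.1, maxn r.2 k)).
move=> Z y.
have [H1 H2] := Hw (fun i => tl k (Z i)) y.
move=> m w premise.
pose mm := fun K => sigma (tl k (Z 0%N)) [seq (y i, tl k (Z i.+1)) | i <- iota 0 K].
pose w0 := fun j : nat => if odd j then y j./2 else (mm j./2).1.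
pose premise0 := fun K : nat =>
     (forall i : nat,
      (i <= K)%N -> block_subspace (tl k (Z i)) /\ subsp (tl k (Z i)) Y) /\
     (forall i : nat, (i < K)%N -> tail_sp Y (mm i).2 (y i)) /\
     (forall j : nat, (j <= K.*2)%N -> T (v ++ mkseq w0 j)).
have eqm : forall K, m K = ((mm K).1, maxn (mm K).2 k).
  by move=> K; rewrite /m /mm -map_comp.
have eqw : forall j, w j = w0 j by move=> j; rewrite /w /w0 eqm.
have eqs : forall j, mkseq w j = mkseq w0 j by move=> j; apply: eq_mkseq.
have conv : forall K, premise K -> premise0 K.
  move=> K [P1 [P2 P3]]; split; [|split].
  - move=> i /P1 [bZ sZ]; have [bt [st supt]] := tl_props k bZ.
    split=> // x hx; apply: HY; [exact/sZ/st | exact: supt].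
  - move=> i /P2; rewrite eqm /tail_sp /= => [[Yy [ynz ysupp]]].
    split; last split => //.
      apply: HY => // t /ysupp; exact: leq_ltn_trans (leq_maxr _ _).
    move=> t /ysupp; exact: leq_ltn_trans (leq_maxl _ _).
  - by move=> j /P3; rewrite eqs.
split.
  move=> K P; have [Q1 [Q2 Q3]] := H1 K (conv K P).
  case: P => [P1 _]; have [bZ _] := P1 K (leqnn K).
  have [_ [st _]] := tl_props k bZ.
  rewrite eqm eqs /=; split; [exact: st | by split].
move=> Hall; have -> : cat_inf v w = cat_inf v w0.
  by apply: functional_extensionality => n; rewrite /cat_inf eqw.
by apply: H2 => K; apply: conv.
Qed.

Definition Pstep (F : countFieldType) (A : (nat -> {poly F}) -> Prop) (T : seq {poly F} -> Prop)
  n (Wn Y : {poly F} -> Prop) :=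
  block_subspace Y /\ subsp Y Wn /\
  (if @unpickle (seq {poly F}) n is Some x then I_has_strategy Y T x A else False).

Definition stepW (F : countFieldType) (A : (nat -> {poly F}) -> Prop) (T : seq {poly F} -> Prop)
  n (Wn : {poly F} -> Prop) :=
  epsilon (inhabits Wn) (fun Y => Pstep A T n Wn Y \/ ((~ exists Y', Pstep A T n Wn Y') /\ Y = Wn)).

Lemma stepW_spec (F : countFieldType) (A : (nat -> {poly F}) -> Prop) (T : seq {poly F} -> Prop) n Wn :
  Pstep A T n Wn (stepW A T n Wn) \/
  ((~ exists Y', Pstep A T n Wn Y') /\ stepW A T n Wn = Wn).
Proof.
apply: (epsilon_spec (inhabits Wn) (fun Y => Pstep A T n Wn Y \/ ((~ exists Y', Pstep A T n Wn Y') /\ Y = Wn))).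
case: (classic (exists Y', Pstep A T n Wn Y')) => [[Y' HY']|H].
  by exists Y'; left.
by exists Wn; right.
Qed.

Fixpoint Wseq (F : countFieldType) (A : (nat -> {poly F}) -> Prop) (T : seq {poly F} -> Prop)
  (V : {poly F} -> Prop) n : {poly F} -> Prop :=
  if n is n'.+1 then stepW A T n' (Wseq A T V n') else V.

Lemma W_step (F : countFieldType) A T (V : {poly F} -> Prop) n :
  block_subspace (Wseq A T V n) ->
  block_subspace (Wseq A T V n.+1) /\ subsp (Wseq A T V n.+1) (Wseq A T V n).
Proof.
move=> H /=; case: (stepW_spec A T n (Wseq A T V n)) => [[b [s _]] | [_ ->]] //.
by split=> // x.
Qed.

Lemma W_block (F : countFieldType) A T (V : {poly F} -> Prop) n :
  block_subspace V -> block_subspace (Wseq A T V n).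
Proof. by move=> bV; elim: n => [//|n IH]; case: (W_step IH). Qed.

Lemma W_dec (F : countFieldType) A T (V : {poly F} -> Prop) i j :
  block_subspace V -> (i <= j)%N -> subsp (Wseq A T V j) (Wseq A T V i).
Proof.
move=> bV; elim: j => [|j IH]; first by rewrite leqn0 => /eqP ->.
rewrite leq_eqVlt => /orP [/eqP -> //| hij] x hx.
rewrite ltnS in hij.
have bj : block_subspace (Wseq A T V j) by exact: W_block.
apply: IH => //; case: (W_step bj) => _; exact.
Qed.

Definition pickz (F : countFieldType) (W : {poly F} -> Prop) (m : nat) : {poly F} :=
  epsilon (inhabits 0) (fun z => W z /\ z != 0 /\ forall t, z`_t != 0 -> (m < t)%N).

Lemma pickz_spec (F : countFieldType) (W : {poly F} -> Prop) m :
  block_subspace W ->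
  W (pickz W m) /\ pickz W m != 0 /\ forall t, (pickz W m)`_t != 0 -> (m < t)%N.
Proof.
move=> bW; apply: (epsilon_spec (inhabits 0) (fun z => W z /\ z != 0 /\ forall t, z`_t != 0 -> (m < t)%N)).
case: (bas_ofP bW) => [[nz sb] HW].
exists (bas_of W m.+1); split; first by apply/HW/span_b.
split; first exact: nz.
by move=> t Ht; exact: (bs_ge (conj nz sb) Ht).
Qed.

Fixpoint dseq (F : countFieldType) (A : (nat -> {poly F}) -> Prop) (T : seq {poly F} -> Prop)
  (V : {poly F} -> Prop) n : {poly F} :=
  if n is n'.+1 then pickz (Wseq A T V n'.+1) (size (dseq A T V n'))
  else pickz (Wseq A T V 0) 0.

Lemma d_props (F : countFieldType) A T (V : {poly F} -> Prop) n :
  block_subspace V ->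
  Wseq A T V n (dseq A T V n) /\ dseq A T V n != 0 /\
  forall t, (dseq A T V n.+1)`_t != 0 -> (size (dseq A T V n) < t)%N.
Proof.
move=> bV.
have [_ [_ h3]] := pickz_spec (size (dseq A T V n)) (W_block A T n.+1 bV).
split; last split; last exact: h3.
- case: n {h3} => [|n].
    by have [a _] := pickz_spec 0 (W_block A T 0 bV).
  by have [a _] := pickz_spec (size (dseq A T V n)) (W_block A T n.+1 bV).
- case: n {h3} => [|n].
    by have [_ [a _]] := pickz_spec 0 (W_block A T 0 bV).
  by have [_ [a _]] := pickz_spec (size (dseq A T V n)) (W_block A T n.+1 bV).
Qed.

Lemma d_block (F : countFieldType) A T (V : {poly F} -> Prop) :
  block_subspace V -> block_seq (dseq A T V).
Proof.
move=> bV; split=> n; first by case: (d_props A T n bV) => _ [].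
move=> i j Hi Hj; case: (d_props A T n bV) => _ [_ h].
exact: ltn_trans (coef_lt_size Hi) (h j Hj).
Qed.

Lemma X_tail (F : countFieldType) A T (V : {poly F} -> Prop) n :
  block_subspace V ->
  tailin (span_of (dseq A T V)) (Wseq A T V n) (\sum_(i < n) size (dseq A T V i)).
Proof.
move=> bV x /span_natP [p [c ->]] Hs.
have bd := d_block A T bV; case: (bd) => nz _.
set K := (\sum_(i < n) size (dseq A T V i))%N in Hs *.
have c0 : forall i, (i < n)%N -> (i < p)%N -> c i = 0.
  move=> i hin hip; have [t Ht] := nz_coef (nz i).
  have tK : (t < K)%N.
    apply: leq_trans (coef_lt_size Ht) _.
    by rewrite /K (bigD1 (Ordinal hin)) //= leq_addr.
  have x0 : (\sum_(i0 < p) c i0 *: dseq A T V i0)`_t = 0.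
    case: (eqVneq (\sum_(i0 < p) c i0 *: dseq A T V i0)`_t 0) => // /Hs.
    by rewrite ltnNge ltnW.
  have rest : forall j : 'I_p, j != Ordinal hip -> (c j *: dseq A T V j)`_t = 0.
    move=> j hj; rewrite coefZ.
    case: (eqVneq ((dseq A T V j)`_t) 0) => [->|h]; first by rewrite mulr0.
    exfalso; case: (ltngtP j i) => hji.
    - by have := bs_lt bd hji h Ht; rewrite ltnn.
    - by have := bs_lt bd hji Ht h; rewrite ltnn.
    - by move: hj; rewrite -(inj_eq val_inj) /= hji eqxx.
  move: x0; rewrite coef_sum (bigD1 (Ordinal hip)) //= big1 ?addr0; last exact: rest.
  by rewrite coefZ => /eqP; rewrite mulf_eq0 (negbTE Ht) orbF => /eqP.
have [Z0 [ZD ZZ]] := bs_closed (W_block A T n bV).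
apply: (span_sum (f := fun i => c i *: dseq A T V i)) => // i hip.
case: (ltnP i n) => hin.
  by rewrite (c0 i hin hip) scale0r.
apply: ZZ; have [hd _] := d_props A T i bV.
exact: (W_dec (A:=A) (T:=T) bV hin hd).
Qed.

Lemma unp_eq (F : countFieldType) A T (Y : {poly F} -> Prop) N x :
  @unpickle (seq {poly F}) N = Some x ->
  (if @unpickle (seq {poly F}) N is Some x then I_has_strategy Y T x A else False) ->
  I_has_strategy Y T x A.
Proof. by move=> ->. Qed.

Theorem mainTheorem5' (F : countFieldType) (A : (nat -> {poly F}) -> Prop)
    (V : {poly F} -> Prop) (v : seq {poly F}) (T : seq {poly F} -> Prop) :
  block_subspace V -> fin_block_seq v -> is_rule V v T ->
  exists X : {poly F} -> Prop,
    block_subspace X /\ subsp X V /\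
    forall x : seq {poly F}, T x ->
      (exists Y, block_subspace Y /\ subsp Y X /\ I_has_strategy Y T x A) ->
      forall Y, block_subspace Y -> subsp Y X -> I_has_strategy Y T x A.
Proof.
move=> bV _ _.
have bd := d_block A T bV.
exists (span_of (dseq A T V)); split; first by exists (dseq A T V).
split.
  move=> x /span_natP [p [c ->]]; apply: (bs_sum _ bV) => i _.
  have [hd _] := d_props A T i bV.
  exact: (W_dec (A:=A) (T:=T) bV (leq0n i) hd).
move=> x _ [Y [bY [sY win]]] Y2 bY2 sY2.
set N := pickle x.
set K := (\sum_(i < N) size (dseq A T V i))%N.
have [bt [st supt]] := tl_props K bY.
have e : @unpickle (seq {poly F}) N = Some x := pickleK x.
have P : Pstep A T N (Wseq A T V N) (tl K Y).
  split=> //; split.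
    by move=> z hz; exact: (X_tail (A:=A) (T:=T) (n:=N) bV (sY z (st z hz)) (supt z hz)).
  destruct (@unpickle (seq {poly F}) N) as [x'|]; last by [].
  case: e => ->; apply: (transfer (k := 0%N)) win.
  by move=> z /st.
have W1 : Pstep A T N (Wseq A T V N) (Wseq A T V N.+1).
  case: (stepW_spec A T N (Wseq A T V N)) => [//|[H _]].
  by exfalso; apply: H; exists (tl K Y).
have winW := unp_eq e (proj2 (proj2 W1)).
apply: (transfer (k := (\sum_(i < N.+1) size (dseq A T V i))%N)) winW.
move=> z /sY2 hz; exact: (X_tail (A:=A) (T:=T) (n:=N.+1) bV hz).
Qed.

Unset Implicit Arguments.
Local Close Scope ring_scope.

Theorem mainTheorem5 (F : countFieldType) (A : (nat -> {poly F}) -> Prop)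
    (V : {poly F} -> Prop) (v : seq {poly F}) (T : seq {poly F} -> Prop) :
  block_subspace V -> fin_block_seq v -> is_rule V v T ->
  exists X : {poly F} -> Prop,
    block_subspace X /\ subsp X V /\
    forall x : seq {poly F}, T x ->
      (exists Y, block_subspace Y /\ subsp Y X /\ I_has_strategy Y T x A) ->
      forall Y, block_subspace Y -> subsp Y X -> I_has_strategy Y T x A.
Proof. exact: mainTheorem5'. Qed.
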